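(* Let $(P,U)$ and $(Q,V)$ be real affine spaces ($P$ modelled on the vector space $U$, $Q$ on $V$), let $g:P\to Q$ be a mapping and $f\in A(Q)$. For each $n\in\mathbb N$, $p\in P$ and $u_1,\dots,u_n\in U$, $$\delta^n(f\circ g)(p;u_1,\dots,u_n)=\sum_{\{I^1,\dots,I^k\}}\delta^k f\Big(g(p);\,\delta^{|I^1|}g(p;\mathbf u^{I^1}),\dots,\delta^{|I^k|}g(p;\mathbf u^{I^k})\Big),$$ where the sum runs over all finite sets $\{I^1,\dots,I^k\}$ ($k\ge0$) of pairwise distinct nonempty subsets of $N=\{1,\dots,n\}$ with $\bigcup_{i=1}^k I^i=N$ (the blocks may overlap).
   Context: $A(Q)$ is the space of real functions on $Q$. For $I=\{i_1<\dots<i_m\}\subset N$, $\mathbf u^I=(u_{i_1},\dots,u_{i_m})$. The $k$-th polarization of $f\in A(Q)$ is $\delta^0f=f$ and, for $k\ge1$, $\delta^kf(q;v_1,\dots,v_k)=(-1)^k\sum_{J\subset\{1,\dots,k\}}(-1)^{|J|}f(q+\sum_{j\in J}v_j)$ (the $J=\emptyset$ term being $f(q)$); it is symmetric in the $v_j$. For a mapping $g:P\to Q$ and $m\ge1$, $\delta^m g(p;u_1,\dots,u_m)=(-1)^m\sum_{J\subset\{1,\dots,m\}}(-1)^{|J|}g(p+\sum_{j\in J}u_j)\in V$ (an affine combination of points with coefficients summing to $0$, hence a vector of $V$). *)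

(* Defs.v *)
From HB Require Import structures.
From mathcomp Require Import all_boot all_order all_algebra.
From mathcomp Require Import reals.
Set Implicit Arguments. Unset Strict Implicit. Unset Printing Implicit Defensive.
Import Order.TTheory GRing.Theory Num.Theory.
Local Open Scope ring_scope.

(* A (real) affine space structure on the type P of points, modelled on the
   vector space U : translation [vadd p u] = p + u and difference
   [vsub q p] = q - p (the unique vector carrying p to q). *)
Record affine (R : pzRingType) (U : lmodType R) (P : Type) := Affine {
  vadd : P -> U -> P;
  vsub : P -> P -> U;
  vadd0 : forall p, vadd p 0 = p;
  vaddA : forall p u v, vadd (vadd p u) v = vadd p (u + v);
  vsubK : forall p q, vadd p (vsub q p) = q;
  vaddK : forall p u, vsub (vadd p u) p = u
}.

Definition polar (R : pzRingType) (U : lmodType R) (P : Type) (aP : affine U P)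
    (f : P -> R) (q : P) (vs : seq U) : R :=
  (-1) ^+ size vs *
  \sum_(J : {set 'I_(size vs)}) (-1) ^+ #|J| *
      f (vadd aP q (\sum_(j in J) nth 0 vs j)).

(* m-th polarization (m = size us >= 1) of a mapping g : P -> Q, at p:
   the vector (-1)^m sum_J (-1)^|J| g(p + sum_{j in J} u_j) of V; since the
   coefficients sum to 0 it is computed as the combination of the vectors
   g(p + sum_J u_j) - g(p). *)
Definition mpolar (R : pzRingType) (U V : lmodType R) (P Q : Type)
    (aP : affine U P) (aQ : affine V Q) (g : P -> Q) (p : P) (us : seq U) : V :=
  (-1) ^+ size us *:
  \sum_(J : {set 'I_(size us)}) ((-1) ^+ #|J| *:
      vsub aQ (g (vadd aP p (\sum_(j in J) nth 0 us j))) (g p)).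

(* Main.v *)
Require Import Defs.
From HB Require Import structures.
From mathcomp Require Import all_boot all_order all_algebra.
From mathcomp Require Import reals.
From mathcomp Require Import lra.
Import Order.TTheory GRing.Theory Num.Theory.
Local Open Scope ring_scope.

Lemma inv_sum0 (R : realType) (I : finType) (P : pred I) (s : I -> I) (F : I -> R) :
  involutive s -> (forall i, P (s i) = P i) -> (forall i, P i -> F (s i) = - F i) ->
  \sum_(i | P i) F i = 0.
Proof.
move=> sK Ps Fs.
have E : \sum_(i | P i) F i = - \sum_(i | P i) F i.
  rewrite {1}(reindex_inj (inv_inj sK)) /= -sumrN.
  apply: eq_big => [i|i]; first exact: Ps.
  by rewrite Ps => /Fs.
lra.
Qed.

Lemma sign_sum (R : realType) (X : finType) (K T : {set X}) :
  \sum_(S : {set X} | (S \subset T) && (K \subset S)) (-1) ^+ #|S|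
  = (if K == T then (-1) ^+ #|T| else 0 : R).
Proof.
case: eqP => [<-|neKT].
  by rewrite (big_pred1 K) // => S /=; rewrite eqEsubset.
case: (boolP (K \subset T)) => sKT; last first.
  rewrite big_pred0 // => S; apply/negP => /andP [h1 h2].
  by move/negP: sKT; apply; apply: subset_trans h2 h1.
have /properP [_ [x xT xK]] : K \proper T by rewrite properEneq sKT andbT; apply/eqP.
apply: (@inv_sum0 _ _ (fun S : {set X} => (S \subset T) && (K \subset S)) (fun S => if x \in S then S :\ x else x |: S)).
- move=> S /=; case: (boolP (x \in S)) => xS.
    by rewrite setD11 setD1K.
  by rewrite setU11 setU1K.
- move=> S /=; case: (boolP (x \in S)) => xS.
    rewrite subsetD1 xK andbT subDset.
    by have -> : [set x] :|: T = T by apply/setUidPr; rewrite sub1set.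
  rewrite subUset sub1set xT /=.
  by have -> : (K \subset x |: S) = (K \subset S) by rewrite -{2}(setU1K xS) subsetD1 xK andbT.
- move=> S _ /=; case: (boolP (x \in S)) => xS.
    by rewrite [in RHS](cardsD1 x S) xS add1n exprS mulN1r opprK.
  by rewrite cardsU1 xS add1n exprS mulN1r.
Qed.

Lemma mobius (R : realType) (Z : lmodType R) (X : finType) (G : {set X} -> Z) (T : {set X}) :
  \sum_(S : {set X} | S \subset T) (-1) ^+ #|S| *:
     \sum_(K : {set X} | K \subset S) (-1) ^+ #|K| *: G K = G T.
Proof.
under eq_bigr do rewrite scaler_sumr.
rewrite (exchange_big_dep (fun K : {set X} => K \subset T)) /=; last first.
  by move=> S K h1 h2; apply: subset_trans h2 h1.
under eq_bigr do rewrite -scaler_suml sign_sum.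
rewrite (bigD1 T) //= eqxx big1 ?addr0.
  by rewrite scalerA -exprMn mulrNN mulr1 expr1n scale1r.
by move=> K /andP [_ /negbTE ->]; rewrite scale0r.
Qed.

Lemma sum_enum (U : zmodType) (X : finType) (A : {set X}) (w : X -> U)
    (Z : nmodType) (Phi : nat -> U -> Z) :
  \sum_(J : {set 'I_(size [seq w i | i <- enum A])})
      Phi #|J| (\sum_(j in J) nth 0 [seq w i | i <- enum A] j) =
  \sum_(K : {set X} | K \subset A) Phi #|K| (\sum_(i in K) w i).
Proof.
set s := [seq w i | i <- enum A].
have Hs : size s = size (enum A) by rewrite size_map.
pose h (j : 'I_(size s)) : X := tnth (in_tuple (enum A)) (cast_ord Hs j).
have hinj : injective h.
  move=> j j' /eqP; rewrite /h (tnth_nth (h j)) (tnth_nth (h j)) /=.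
  rewrite nth_uniq ?enum_uniq // -?Hs // => /eqP E; exact: val_inj.
have hw : forall j : 'I_(size s), nth 0 s j = w (h j).
  by move=> j; rewrite /h (tnth_nth (h j)) /= (nth_map (h j)) // -Hs.
have hA : forall j, h j \in A by move=> j; rewrite -mem_enum /h mem_tnth.
have hsurj : forall x, x \in A -> exists j, x = h j.
  move=> x xA; have xi : (index x (enum A) < size s)%N by rewrite Hs index_mem mem_enum.
  by exists (Ordinal xi); rewrite /h (tnth_nth x) /= nth_index // mem_enum.
symmetry; rewrite (reindex (fun J : {set 'I_(size s)} => h @: J)) /=.
  apply: eq_big => [J|J _].
    by apply/subsetP => x /imsetP [j _ ->].
  rewrite card_imset // big_imset /=; last by move=> ? ? _ _; apply: hinj.
  by congr Phi; apply: eq_bigr => j _; rewrite hw.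
exists (fun K : {set X} => h @^-1: K) => [J _|K KA].
  by apply/setP => j; rewrite inE mem_imset.
apply/setP => x; apply/imsetP/idP => [[j]|xK]; first by rewrite inE => ? ->.
have [j Ej] := hsurj x (subsetP KA x xK).
by apply: (@ex_intro2 _ _ _ j) => //; rewrite inE -Ej.
Qed.

Lemma polar_enum (R : realType) (U : lmodType R) (P : Type) (aP : affine U P)
    (f : P -> R) (q : P) (X : finType) (A : {set X}) (w : X -> U) :
  polar aP f q [seq w i | i <- enum A] =
  (-1) ^+ #|A| * \sum_(K : {set X} | K \subset A)
      (-1) ^+ #|K| * f (vadd aP q (\sum_(i in K) w i)).
Proof.
rewrite /polar (@sum_enum _ _ A w _ (fun k x => (-1) ^+ k * f (vadd aP q x))).
by rewrite size_map -cardE.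
Qed.

Lemma mpolar_enum (R : realType) (U V : lmodType R) (P Q : Type)
    (aP : affine U P) (aQ : affine V Q) (g : P -> Q) (p : P)
    (X : finType) (A : {set X}) (w : X -> U) :
  mpolar aP aQ g p [seq w i | i <- enum A] =
  (-1) ^+ #|A| *: \sum_(K : {set X} | K \subset A)
      (-1) ^+ #|K| *: vsub aQ (g (vadd aP p (\sum_(i in K) w i))) (g p).
Proof.
rewrite /mpolar (@sum_enum _ _ A w _ (fun k x => (-1) ^+ k *: vsub aQ (g (vadd aP p x)) (g p))).
by rewrite size_map -cardE.
Qed.

Theorem proposition4 (R : realType) (U V : lmodType R) (P Q : Type)
    (aP : affine U P) (aQ : affine V Q) (g : P -> Q) (f : Q -> R)
    (n : nat) (p : P) (u : 'I_n -> U) :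
  polar aP (f \o g) p [seq u i | i <- enum 'I_n] =
  \sum_(S : {set {set 'I_n}} |
          (set0 \notin S) && (\bigcup_(B in S) B == [set: 'I_n]))
     polar aQ f (g p)
       [seq mpolar aP aQ g p [seq u i | i <- enum B] | B : {set 'I_n} <- enum S].
Proof.
set q := g p.
pose uS (J : {set 'I_n}) := \sum_(i in J) u i.
pose G (J : {set 'I_n}) := vsub aQ (g (vadd aP p (uS J))) q.
pose d (B : {set 'I_n}) := mpolar aP aQ g p [seq u i | i <- enum B].
have dE : forall B, d B = (-1) ^+ #|B| *: \sum_(K : {set 'I_n} | K \subset B) (-1) ^+ #|K| *: G K.
  by move=> B; rewrite /d mpolar_enum.
have dsum : forall J : {set 'I_n}, \sum_(B : {set 'I_n} | B \subset J) d B = G J.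
  by move=> J; rewrite -[RHS](@mobius _ _ _ G J); apply: eq_bigr => B _; exact: dE.
have G0 : G set0 = 0.
  rewrite /G /uS big_set0 vadd0.
  by have := vaddK aQ q 0; rewrite vadd0.
have d0 : d set0 = 0.
  by rewrite dE (big_pred1 set0) ?G0 ?scaler0 // => K; rewrite subset0.
pose TJ (J : {set 'I_n}) := [set B : {set 'I_n} | (B != set0) && (B \subset J)].
have FT : forall J : {set 'I_n}, \sum_(B in TJ J) d B = G J.
  move=> J; rewrite -dsum [RHS](bigD1 set0) ?sub0set //= d0 add0r.
  by apply: eq_bigl => B; rewrite inE andbC.
pose F (T : {set {set 'I_n}}) := f (vadd aQ q (\sum_(B in T) d B)).
pose h (S : {set {set 'I_n}}) :=
  (-1) ^+ #|S| * \sum_(T : {set {set 'I_n}} | T \subset S) (-1) ^+ #|T| * F T.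
have FE : forall T : {set {set 'I_n}}, F T = \sum_(S : {set {set 'I_n}} | S \subset T) h S.
  by move=> T; symmetry; exact: (@mobius _ R^o _ F T).
have key : forall J : {set 'I_n}, (f \o g) (vadd aP p (\sum_(i in J) u i))
    = \sum_(S : {set {set 'I_n}} | S \subset TJ J) h S.
  by move=> J; rewrite -FE /F FT /G vsubK.
have -> : enum 'I_n = enum [set: 'I_n] by rewrite enum_setT enumT.
rewrite polar_enum cardsT card_ord.
under eq_bigr do rewrite key.
have RHSE : forall S : {set {set 'I_n}},
  polar aQ f q [seq mpolar aP aQ g p [seq u i | i <- enum B] | B : {set 'I_n} <- enum S] = h S.
  by move=> S; rewrite polar_enum.
under [RHS]eq_bigr do rewrite RHSE.
rewrite mulr_sumr.
rewrite [LHS](eq_bigr (fun J : {set 'I_n} => \sum_(S : {set {set 'I_n}} | S \subset TJ J) (-1) ^+ n * ((-1) ^+ #|J| * h S))); last by move=> J _; rewrite -mulr_sumr -mulr_sumr.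
rewrite (exchange_big_dep (fun S : {set {set 'I_n}} => set0 \notin S)) /=; last first.
  move=> J S _ sS; apply/negP => /(subsetP sS); by rewrite inE eqxx.
rewrite [RHS]big_mkcondr; apply: eq_bigr => S S0.
have cond : forall J : {set 'I_n}, (J \subset [set: 'I_n]) && (S \subset TJ J) =
    (J \subset [set: 'I_n]) && (\bigcup_(B in S) B \subset J).
  move=> J; rewrite subsetT /=.
  apply/subsetP/bigcupsP => [H B BS|H B BS].
    by have := H B BS; rewrite inE => /andP [].
  rewrite inE H // andbT.
  by apply: (contraNneq _ S0) => E; rewrite -E.
rewrite (eq_bigl _ _ cond).
under eq_bigr do rewrite mulrA.
rewrite -mulr_suml -mulr_sumr sign_sum.
case: ifP => _; last by rewrite mulr0 mul0r.
by rewrite cardsT card_ord mulrA -exprMn mulrNN mulr1 expr1n mul1r.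
Qed.
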